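(* Let $H_1,\dots,H_n$, $PV_1,\dots,PV_n$, $I$, $F_1,\dots,F_n$ and $G$ be as follows: the $p$-values have arbitrary joint dependence, $I$ is the set of true nulls, $F_i$ is the null distribution function of $PV_i$ (so $P(PV_j\le x)=F_j(x)$ for $j\in I$) with $F_i(u)\le u$ for all $u\in(0,1)$, and $G(x)=\sum_{i=1}^nF_i(x)$. Let $0=\tilde y_0\le\tilde y_1\le\cdots\le\tilde y_n$ with $\tilde y_n>0$, define $D=\sum_{i=1}^n\frac{1}{i}(\tilde y_i-\tilde y_{i-1})$, and for $\alpha\in(0,1)$ set $y_i=\frac{\alpha}{D}\tilde y_i$. Let $0\le c_1\le\cdots\le c_n\le1$ satisfy $G(c_i)\le y_i$ for $i=1,\dots,n$. Then the step-up procedure with critical values $c$ satisfies $\mathrm{FDR}(c)\le\alpha$. In particular, for $\tilde y_i=i$ one has $D=\sum_{i=1}^n 1/i$, and for $\tilde y_i=i(i+1)$ one has $D=2n$.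
   Context: Step-up procedure with critical values $c_1\le\cdots\le c_n$: let $PV_{(1)}\le\cdots\le PV_{(n)}$ be the ordered $p$-values with corresponding hypotheses $H_{(1)},\dots,H_{(n)}$; let $k=\max\{i: PV_{(i)}\le c_i\}$ and reject $H_{(1)},\dots,H_{(k)}$; if no such $i$ exists, reject nothing. With $R$ the number of rejections and $V$ the number of rejected true null hypotheses, $\mathrm{FDR}(c)=E[V/\max(R,1)]$. *)

(* Defs.v *)
From Stdlib Require Import Reals Lra List Orders Sorting.Mergesort.
Open Scope R_scope.

(* ---------- Probability space ----------
   A (finitely additive) probability on ALL events of a sample space Omega.
   Every genuine probability space extends to such an object (finitely
   additive extension of a probability to the power set), so a statement
   proved for all such objects covers all probability spaces. *)
Record FAProb (Omega : Type) := {
  Pr : (Omega -> Prop) -> R;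
  Pr_nonneg : forall A, 0 <= Pr A;
  Pr_total : Pr (fun _ => True) = 1;
  Pr_ext : forall A B : Omega -> Prop, (forall w, A w <-> B w) -> Pr A = Pr B;
  Pr_add : forall A B : Omega -> Prop, (forall w, A w -> B w -> False) ->
           Pr (fun w => A w \/ B w) = Pr A + Pr B
}.
Arguments Pr {Omega} _ _.

Definition is_cdf (F : R -> R) : Prop :=
  (forall x y, x <= y -> F x <= F y) /\
  (forall x, 0 <= F x <= 1) /\
  (forall x eps, 0 < eps -> exists delta, 0 < delta /\
       forall y, x <= y < x + delta -> Rabs (F y - F x) < eps) /\
  (forall eps, 0 < eps -> exists M, forall x, x <= M -> F x < eps) /\
  (forall eps, 0 < eps -> exists M, forall x, M <= x -> 1 - eps < F x).

Fixpoint sumR_upto (b : nat) (f : nat -> R) : R :=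
  match b with O => f O | S b' => sumR_upto b' f + f b end.
Definition sum_1_to (n : nat) (f : nat -> R) : R :=
  match n with O => 0 | S _ => sumR_upto n f - f O end.

Definition Gfun (n : nat) (F : nat -> R -> R) (x : R) : R :=
  sum_1_to n (fun i => F i x).

Definition Dsum (n : nat) (yt : nat -> R) : R :=
  sum_1_to n (fun i => (yt i - yt (i - 1)%nat) / INR i).

Module PairLe <: TotalLeBool.
  Definition t := (nat * R)%type.
  Definition leb (x y : t) : bool := if Rle_dec (snd x) (snd y) then true else false.
  Theorem leb_total : forall x y, leb x y = true \/ leb y x = true.
  Proof.
    intros x y; unfold leb; destruct (Rle_dec (snd x) (snd y)); auto.
    destruct (Rle_dec (snd y) (snd x)); auto. lra.
  Qed.
End PairLe.
Module PairSort := Sort PairLe.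

(* hypotheses indexed 1..n; the list of (index, p-value) sorted by p-value:
   its i-th element (0-based) is (index of H_(i+1), PV_(i+1)). *)
Definition sorted_pvals (n : nat) (pv : nat -> R) : list (nat * R) :=
  PairSort.sort (map (fun j => (j, pv j)) (seq 1 n)).

Fixpoint stepup_k (l : list (nat * R)) (c : nat -> R) (i0 : nat) : nat :=
  match i0 with
  | O => O
  | S i' => if Rle_dec (snd (nth i' l (O, 0))) (c i0) then i0 else stepup_k l c i'
  end.

Definition num_rej (n : nat) (c : nat -> R) (pv : nat -> R) : nat :=
  stepup_k (sorted_pvals n pv) c n.

Definition rejected (n : nat) (c : nat -> R) (pv : nat -> R) : list nat :=
  map fst (firstn (num_rej n c pv) (sorted_pvals n pv)).

Definition num_false_rej (n : nat) (I : nat -> bool) (c : nat -> R) (pv : nat -> R) : nat :=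
  length (filter I (rejected n c pv)).

(* FDR(c) = E[ V / max(R,1) ]; V/max(R,1) is a simple random variable with
   values v/max(r,1), 0 <= v, r <= n, so its expectation is the finite sum. *)
Definition FDR {Omega : Type} (P : FAProb Omega) (n : nat) (I : nat -> bool)
  (PV : nat -> Omega -> R) (c : nat -> R) : R :=
  sumR_upto n (fun r => sumR_upto n (fun v =>
    INR v / INR (Nat.max r 1) *
    Pr P (fun w => num_false_rej n I c (fun j => PV j w) = v /\
                   num_rej n c (fun j => PV j w) = r))).

(* Main.v *)
Require Import Defs.
From Stdlib Require Import Reals Lra Lia List Sorted Permutation ClassicalEpsilon Classical.
Open Scope R_scope.

Fixpoint s1 (n : nat) (f : nat -> R) : R :=
  match n with O => 0 | S m => s1 m f + f (S m) end.

Lemma sumR_upto_s1 n f : sumR_upto n f = f O + s1 n f.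
Proof. induction n; simpl; [lra | rewrite IHn; lra]. Qed.

Lemma sum_1_to_s1 n f : sum_1_to n f = s1 n f.
Proof. destruct n; [reflexivity|]. unfold sum_1_to. rewrite sumR_upto_s1. lra. Qed.

Lemma s1_le n f g : (forall j, (1 <= j <= n)%nat -> f j <= g j) -> s1 n f <= s1 n g.
Proof.
  induction n; intros H; simpl; [lra|].
  assert (s1 n f <= s1 n g) by (apply IHn; intros; apply H; lia).
  assert (f (S n) <= g (S n)) by (apply H; lia). lra.
Qed.

Lemma s1_ext n f g : (forall j, (1 <= j <= n)%nat -> f j = g j) -> s1 n f = s1 n g.
Proof.
  induction n; intros H; simpl; [lra|].
  rewrite IHn by (intros; apply H; lia). rewrite H by lia. lra.
Qed.

Lemma s1_scal n a f : s1 n (fun j => a * f j) = a * s1 n f.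
Proof. induction n; simpl; [ring|rewrite IHn; ring]. Qed.

Lemma s1_zero n : s1 n (fun _ => 0) = 0.
Proof. induction n; simpl; [lra|rewrite IHn; lra]. Qed.

Lemma s1_nonneg n f : (forall j, (1 <= j <= n)%nat -> 0 <= f j) -> 0 <= s1 n f.
Proof. intros H. rewrite <- (s1_zero n). apply s1_le. auto. Qed.

Lemma sumR_upto_ext n f g : (forall j, (j <= n)%nat -> f j = g j) -> sumR_upto n f = sumR_upto n g.
Proof.
  induction n; intros H; simpl; [apply H; lia|].
  rewrite IHn by (intros; apply H; lia). rewrite H by lia. lra.
Qed.

Lemma sum_delta n f v0 : (v0 <= n)%nat -> (forall v, v <> v0 -> f v = 0) -> sumR_upto n f = f v0.
Proof.
  induction n; intros Hv H; simpl.
  - replace v0 with O by lia. reflexivity.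
  - destruct (Nat.eq_dec v0 (S n)) as [->|ne].
    + assert (Z : sumR_upto n f = 0).
      { assert (G : forall m, (m <= n)%nat -> sumR_upto m f = 0).
        { induction m; intros; simpl; [apply H; lia|]. rewrite IHm by lia. rewrite H by lia. lra. }
        apply G; lia. }
      rewrite Z. lra.
    + rewrite IHn; [|lia|exact H]. rewrite (H (S n)) by lia. lra.
Qed.

Definition indP (A : Prop) : R := if excluded_middle_informative A then 1 else 0.

Fixpoint sumL {A} (phi : A -> R) (L : list A) : R :=
  match L with nil => 0 | x :: L' => phi x + sumL phi L' end.

Lemma sumL_app {A} phi (L1 L2 : list A) : sumL phi (L1 ++ L2) = sumL phi L1 + sumL phi L2.
Proof. induction L1; simpl; [lra| rewrite IHL1; lra]. Qed.

Lemma sumL_ext {A} phi psi (L : list A) : (forall x, phi x = psi x) -> sumL phi L = sumL psi L.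
Proof. intros H; induction L; simpl; [lra| rewrite IHL, H; lra]. Qed.

Lemma sumL_fm_upto {A} phi (g : nat -> list A) n :
  sumL phi (flat_map g (seq 0 (S n))) = sumR_upto n (fun r => sumL phi (g r)).
Proof.
  induction n.
  - simpl. rewrite app_nil_r. reflexivity.
  - rewrite seq_S, flat_map_app, sumL_app, IHn. simpl. rewrite app_nil_r. reflexivity.
Qed.

Lemma sumL_fm_1n {A} phi (g : nat -> list A) n :
  sumL phi (flat_map g (seq 1 n)) = s1 n (fun r => sumL phi (g r)).
Proof.
  induction n.
  - reflexivity.
  - rewrite seq_S, flat_map_app, sumL_app, IHn. simpl. rewrite app_nil_r. reflexivity.
Qed.

Definition Elist {Omega} (P : FAProb Omega) (L : list (R * (Omega -> Prop))) := sumL (fun p => fst p * Pr P (snd p)) L.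
Definition flist {Omega : Type} (L : list (R * (Omega -> Prop))) (w : Omega) :=
  sumL (fun p => fst p * indP (snd p w)) L.

Lemma Pr_empty {Omega} (P : FAProb Omega) (A : Omega -> Prop) : (forall w, ~ A w) -> Pr P A = 0.
Proof.
  intros H.
  pose proof (Pr_add _ P A A (fun w a _ => H w a)) as H1.
  rewrite (Pr_ext _ P (fun w => A w \/ A w) A) in H1 by (intros; tauto). lra.
Qed.

Lemma Pr_split {Omega} (P : FAProb Omega) (S B : Omega -> Prop) :
  Pr P S = Pr P (fun w => S w /\ B w) + Pr P (fun w => S w /\ ~ B w).
Proof.
  rewrite <- Pr_add by (intros w [] []; tauto).
  apply Pr_ext. intros w. pose proof (classic (B w)). tauto.
Qed.

Lemma sumL_split {Omega} (P : FAProb Omega) (L : list (R * (Omega -> Prop))) S B :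
  sumL (fun p => fst p * Pr P (fun w => snd p w /\ S w)) L =
  sumL (fun p => fst p * Pr P (fun w => snd p w /\ (S w /\ B w))) L +
  sumL (fun p => fst p * Pr P (fun w => snd p w /\ (S w /\ ~ B w))) L.
Proof.
  induction L as [|[w0 C] L IH]; simpl; [lra|]. rewrite IH.
  rewrite (Pr_split P (fun w => C w /\ S w) B).
  rewrite (Pr_ext _ P (fun w => (C w /\ S w) /\ B w) (fun w => C w /\ S w /\ B w)) by (intros; tauto).
  rewrite (Pr_ext _ P (fun w => (C w /\ S w) /\ ~ B w) (fun w => C w /\ S w /\ ~ B w)) by (intros; tauto).
  ring.
Qed.

Lemma key {Omega} (P : FAProb Omega) (L : list (R * (Omega -> Prop))) : forall S c, (forall w, S w -> 0 <= c + flist L w) ->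
  0 <= c * Pr P S + sumL (fun p => fst p * Pr P (fun w => snd p w /\ S w)) L.
Proof.
  induction L as [|[w0 B] L IH]; intros S c H; simpl.
  - destruct (classic (exists w, S w)) as [[w Sw]|ne].
    + specialize (H w Sw). unfold flist in H; simpl in H.
      pose proof (Pr_nonneg _ P S). nra.
    + rewrite (Pr_empty P) by (intros w Sw; apply ne; eauto). lra.
  - rewrite (Pr_split P S B), (sumL_split P L S B).
    rewrite (Pr_ext _ P (fun w => B w /\ S w) (fun w => S w /\ B w)) by (intros; tauto).
    assert (H1 := IH (fun w => S w /\ B w) (c + w0)).
    assert (H2 := IH (fun w => S w /\ ~ B w) c).
    assert (A1 : 0 <= (c + w0) * Pr P (fun w => S w /\ B w) +
      sumL (fun p => fst p * Pr P (fun w => snd p w /\ S w /\ B w)) L).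
    { apply H1. intros w [Sw Bw]. specialize (H w Sw). unfold flist in H |- *; simpl in H.
      unfold indP at 1 in H. destruct (excluded_middle_informative (B w)); [|tauto]. lra. }
    assert (A2 : 0 <= c * Pr P (fun w => S w /\ ~ B w) +
      sumL (fun p => fst p * Pr P (fun w => snd p w /\ S w /\ ~ B w)) L).
    { apply H2. intros w [Sw Bw]. specialize (H w Sw). unfold flist in H |- *; simpl in H.
      unfold indP at 1 in H. destruct (excluded_middle_informative (B w)); [tauto|]. lra. }
    simpl. lra.
Qed.

Lemma Elist_mono {Omega} (P : FAProb Omega) L1 L2 : (forall w : Omega, flist L1 w <= flist L2 w) -> Elist P L1 <= Elist P L2.
Proof.
  intros H.
  set (L := L2 ++ map (fun p => (- fst p, snd p)) L1).
  assert (Hneg : forall phi : (Omega -> Prop) -> R, forall M,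
    sumL (fun p => fst p * phi (snd p)) (map (fun p => (- fst p, snd p)) M) = - sumL (fun p => fst p * phi (snd p)) M).
  { intros phi M. induction M as [|[a b] M IHM]; simpl; [lra|]. rewrite IHM. lra. }
  pose proof (key P L (fun _ => True) 0) as K.
  assert (Hf : forall w, flist L w = flist L2 w - flist L1 w).
  { intros w. unfold flist, L. rewrite sumL_app.
    rewrite (Hneg (fun B => indP (B w))). lra. }
  assert (0 <= 0 * Pr P (fun _ => True) +
      sumL (fun p => fst p * Pr P (fun w => snd p w /\ True)) L) as K'.
  { apply K. intros w _. rewrite Hf. specialize (H w). lra. }
  rewrite (sumL_ext _ (fun p => fst p * Pr P (snd p))) in K'.
  2:{ intros [a b]; simpl. rewrite (Pr_ext _ P (fun w => b w /\ True) b) by (intros; tauto). reflexivity. }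
  unfold L in K'. rewrite sumL_app, (Hneg (fun B => Pr P B)) in K'. unfold Elist. lra.
Qed.

Lemma stepup_le l c i0 : (stepup_k l c i0 <= i0)%nat.
Proof. induction i0; simpl; [lia|]. destruct Rle_dec; lia. Qed.

Lemma stepup_spec l c i0 : (1 <= stepup_k l c i0)%nat ->
  snd (nth (stepup_k l c i0 - 1) l (O, 0)) <= c (stepup_k l c i0).
Proof.
  induction i0; simpl; [lia|]. destruct Rle_dec as [h|h]; auto.
  intros _. replace (S i0 - 1)%nat with i0 by lia. exact h.
Qed.

Lemma SS_nth {A} (Rl : A -> A -> Prop) l d : StronglySorted Rl l ->
  forall i j, (i < j < length l)%nat -> Rl (nth i l d) (nth j l d).
Proof.
  induction 1 as [|a l Hs IH Hf]; intros i j Hij; simpl in *; [lia|].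
  destruct i, j; try lia.
  - rewrite Forall_forall in Hf. apply Hf. apply nth_In. lia.
  - apply IH. lia.
Qed.

Lemma NoDup_firstn' {A} (l : list A) k : NoDup l -> NoDup (firstn k l).
Proof.
  intros H. rewrite <- (firstn_skipn k l) in H. apply NoDup_app_remove_r in H. exact H.
Qed.

Definition qf (I : nat -> bool) (pv : nat -> R) (x : R) (j : nat) : bool :=
  I j && (if Rle_dec (pv j) x then true else false).


Lemma l_perm (n : nat) (pv : nat -> R) : Permutation (map (fun j => (j, pv j)) (seq 1 n)) (sorted_pvals n pv).
Proof. apply PairSort.Permuted_sort. Qed.

Lemma l_len (n : nat) (pv : nat -> R) : length (sorted_pvals n pv) = n.
Proof. rewrite <- (Permutation_length (l_perm n pv)), length_map, length_seq. reflexivity. Qed.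

Lemma l_in (n : nat) (pv : nat -> R) y : In y (sorted_pvals n pv) -> In (fst y) (seq 1 n) /\ snd y = pv (fst y).
Proof.
  intros H. apply (Permutation_in _ (Permutation_sym (l_perm n pv))) in H.
  apply in_map_iff in H as [j [<- Hj]]. simpl. auto.
Qed.

Lemma l_SS (n : nat) (pv : nat -> R) : StronglySorted (fun x y : nat * R =>
          is_true (if Rle_dec (snd x) (snd y) then true else false)) (sorted_pvals n pv).
Proof.
  apply Sorted_StronglySorted; [|apply PairSort.Sorted_sort].
  intros x y z. unfold is_true. destruct (Rle_dec (snd x) (snd y)); [|discriminate].
  destruct (Rle_dec (snd y) (snd z)); [|discriminate].
  destruct (Rle_dec (snd x) (snd z)); auto. lra.
Qed.

Lemma l_nodup (n : nat) (pv : nat -> R) : NoDup (map fst (sorted_pvals n pv)).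
Proof.
  apply (Permutation_NoDup (Permutation_map fst (l_perm n pv))).
  rewrite map_map. simpl. rewrite map_id. apply seq_NoDup.
Qed.

Lemma R_le_n (n : nat) (pv : nat -> R) (c : nat -> R) (I : nat -> bool) : (num_rej n c pv <= n)%nat.
Proof. apply stepup_le. Qed.

Lemma V_le_R (n : nat) (pv : nat -> R) (c : nat -> R) (I : nat -> bool) : (num_false_rej n I c pv <= num_rej n c pv)%nat.
Proof.
  unfold num_false_rej, rejected.
  eapply Nat.le_trans; [apply filter_length_le|].
  rewrite length_map. apply firstn_le_length.
Qed.

Lemma V_R0 (n : nat) (pv : nat -> R) (c : nat -> R) (I : nat -> bool) : num_rej n c pv = O -> num_false_rej n I c pv = O.
Proof. unfold num_false_rej, rejected. intros ->. reflexivity. Qed.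

Lemma V_le_N (n : nat) (pv : nat -> R) (c : nat -> R) (I : nat -> bool) : (1 <= num_rej n c pv)%nat ->
  (num_false_rej n I c pv <= length (filter (qf I pv (c (num_rej n c pv))) (seq 1 n)))%nat.
Proof.
  intros Hk. pose proof (R_le_n n pv c I) as Hkn.
  unfold num_false_rej, rejected. 
  set (k := num_rej n c pv) in *.
  assert (Hspec : snd (nth (k - 1) (sorted_pvals n pv) (O, 0)) <= c k).
  { unfold k, num_rej. apply stepup_spec. exact Hk. }
  apply NoDup_incl_length.
  - apply NoDup_filter. rewrite <- firstn_map. apply NoDup_firstn'. apply (l_nodup n pv).
  - intros j Hj. apply filter_In in Hj as [Hj Ij].
    apply in_map_iff in Hj as [y [<- Hy]].
    apply (In_nth _ _ (O, 0)) in Hy as [m [Hm Hny]].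
    rewrite length_firstn, l_len in Hm.
    rewrite nth_firstn in Hny.
    assert (Hmk : (m < k)%nat) by lia.
    replace (m <? k)%nat with true in Hny by (symmetry; apply Nat.ltb_lt; exact Hmk).
    assert (Hyl : In y (sorted_pvals n pv)) by (rewrite <- Hny; apply nth_In; rewrite (l_len n pv); lia).
    destruct (l_in n pv y Hyl) as [Hs Hsnd].
    assert (Hle : snd y <= snd (nth (k - 1) (sorted_pvals n pv) (O, 0))).
    { destruct (Nat.eq_dec m (k - 1)) as [e|ne].
      - rewrite <- Hny, e. lra.
      - pose proof (SS_nth _ (sorted_pvals n pv) (O, 0) (l_SS n pv) m (k - 1)) as HS.
        rewrite (l_len n pv) in HS. specialize (HS ltac:(lia)).
        rewrite Hny in HS. unfold is_true in HS.
        destruct Rle_dec; [assumption|discriminate]. }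
    apply filter_In. split; [exact Hs|].
    unfold qf. rewrite Ij. simpl. destruct Rle_dec as [|n0]; [reflexivity|].
    exfalso. apply n0. rewrite <- Hsnd. lra.
Qed.

Lemma ind_true (A : Prop) : A -> indP A = 1.
Proof. intros a; unfold indP; destruct excluded_middle_informative; tauto. Qed.
Lemma ind_false (A : Prop) : ~ A -> indP A = 0.
Proof. intros a; unfold indP; destruct excluded_middle_informative; tauto. Qed.

Lemma sumR_upto_zero n f : (forall v, f v = 0) -> sumR_upto n f = 0.
Proof. intros H. induction n; simpl; rewrite ?IHn, H; lra. Qed.

Lemma INR_gt0 k : (1 <= k)%nat -> 0 < INR k.
Proof. intros; apply lt_0_INR; lia. Qed.

Lemma count_lemma n (I : nat -> bool) (pv : nat -> R) x :
  s1 n (fun j => indP (I j = true /\ pv j <= x)) = INR (length (filter (qf I pv x) (seq 1 n))).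
Proof.
  induction n; [reflexivity|]. cbn [s1]. rewrite IHn, seq_S, filter_app, length_app, plus_INR.
  simpl. replace (qf I pv x (S n)) with (andb (I (S n)) (if Rle_dec (pv (S n)) x then true else false)) by reflexivity.
  destruct (I (S n)) eqn:E; simpl.
  - destruct Rle_dec as [h|h]; simpl.
    + rewrite ind_true by auto. lra.
    + rewrite ind_false by tauto. lra.
  - rewrite ind_false by (intros [e _]; discriminate). lra.
Qed.

Lemma filter_length_mono {A} (f g : A -> bool) l : (forall x, f x = true -> g x = true) ->
  (length (filter f l) <= length (filter g l))%nat.
Proof.
  intros H; induction l; simpl; [lia|].
  destruct (f a) eqn:E. rewrite (H a E). simpl. lia.
  destruct (g a); simpl; lia.
Qed.

Lemma coef_nonneg k : (1 <= k)%nat -> 0 <= 1 / INR k - 1 / INR (S k).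
Proof.
  intros Hk. pose proof (INR_gt0 k Hk). rewrite S_INR. unfold Rdiv; rewrite !Rmult_1_l.
  assert (/ (INR k + 1) <= / INR k) by (apply Rinv_le_contravar; lra). lra.
Qed.

Lemma tel n (N : nat -> R) r : (forall k, 0 <= N k) ->
  (forall k k', (1 <= k <= k')%nat -> (k' <= n)%nat -> N k <= N k') -> (1 <= r)%nat ->
  forall m, (r <= m)%nat -> (m <= n)%nat ->
  N r * (1 / INR r - 1 / INR (S m)) <= s1 m (fun k => (1 / INR k - 1 / INR (S k)) * N k).
Proof.
  intros H0 Hm Hr. induction m; intros Hrm Hmn; [lia|].
  cbn [s1].
  assert (Hc : 0 <= 1 / INR (S m) - 1 / INR (S (S m))).
  { apply coef_nonneg; lia. }
  destruct (Nat.eq_dec r (S m)) as [->|ne].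
  - assert (0 <= s1 m (fun k => (1 / INR k - 1 / INR (S k)) * N k)).
    { apply s1_nonneg. intros j Hj. apply Rmult_le_pos; [|apply H0].
      apply coef_nonneg; lia. }
    rewrite (Rmult_comm (N (S m))). lra.
  - specialize (IHm ltac:(lia) ltac:(lia)).
    assert (N r <= N (S m)) by (apply Hm; lia).
    assert (N r * (1 / INR r - 1 / INR (S (S m))) =
            N r * (1 / INR r - 1 / INR (S m)) + N r * (1 / INR (S m) - 1 / INR (S (S m)))) by ring.
    nra.
Qed.

Lemma pw_ineq n (N : nat -> R) (v : R) (Rn : nat) : (forall k, 0 <= N k) ->
  (forall k k', (1 <= k <= k')%nat -> (k' <= n)%nat -> N k <= N k') -> (Rn <= n)%nat ->
  (Rn = O -> v = 0) -> ((1 <= Rn)%nat -> v <= N Rn) ->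
  v / INR (Nat.max Rn 1) <= s1 n (fun k => (1 / INR k - 1 / INR (S k)) * N k) + 1 / INR (S n) * N n.
Proof.
  intros H0 Hm HRn Hv0 Hv.
  assert (HS : 0 < INR (S n)) by (apply INR_gt0; lia).
  destruct Rn as [|r].
  - rewrite Hv0 by reflexivity. unfold Rdiv; rewrite Rmult_0_l.
    assert (0 <= s1 n (fun k => (1 / INR k - 1 / INR (S k)) * N k)).
    { apply s1_nonneg. intros j Hj. apply Rmult_le_pos; [|apply H0].
      apply coef_nonneg; lia. }
    pose proof (H0 n). assert (0 <= 1 / INR (S n)) by (apply Rlt_le, Rdiv_lt_0_compat; lra). nra.
  - replace (Nat.max (S r) 1) with (S r) by lia.
    pose proof (tel n N (S r) H0 Hm ltac:(lia) n ltac:(lia) ltac:(lia)) as T.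
    specialize (Hv ltac:(lia)).
    assert (N (S r) <= N n) by (apply Hm; lia).
    pose proof (INR_gt0 (S r) ltac:(lia)).
    assert (v / INR (S r) <= N (S r) / INR (S r)) by (apply Rmult_le_compat_r; [apply Rlt_le, Rinv_0_lt_compat; lra| lra]).
    assert (N (S r) / INR (S r) = N (S r) * (1 / INR (S r) - 1 / INR (S n)) + 1 / INR (S n) * N (S r)) by (field; lra).
    assert (1 / INR (S n) * N (S r) <= 1 / INR (S n) * N n) by (apply Rmult_le_compat_l; [apply Rlt_le, Rdiv_lt_0_compat; lra|lra]).
    lra.
Qed.

Lemma abel n (y : nat -> R) : y O = 0 ->
  s1 n (fun k => (1 / INR k - 1 / INR (S k)) * y k) + 1 / INR (S n) * y n =
  s1 n (fun k => (y k - y (k - 1)%nat) / INR k).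
Proof.
  intros Hy0. induction n.
  - simpl. rewrite Hy0. lra.
  - cbn [s1]. replace (S n - 1)%nat with n by lia.
    assert (0 < INR (S n)) by (apply INR_gt0; lia).
    assert (0 < INR (S (S n))) by (apply INR_gt0; lia).
    rewrite <- IHn. field. lra.
Qed.

Lemma s1_const n a : s1 n (fun _ => a) = a * INR n.
Proof. induction n; simpl s1; [simpl; ring|]. rewrite IHn, S_INR. ring. Qed.

Theorem corollary1
  (Omega : Type) (P : FAProb Omega) (n : nat)
  (PV : nat -> Omega -> R)
  (I : nat -> bool)
  (F : nat -> R -> R)
  (yt : nat -> R) (alpha : R) (c : nat -> R)
  (HI : forall j, I j = true -> (1 <= j <= n)%nat)
  (HFcdf : forall i, (1 <= i <= n)%nat -> is_cdf (F i))
  (HFu : forall i u, (1 <= i <= n)%nat -> 0 < u < 1 -> F i u <= u)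
  (HPV : forall j x, I j = true -> Pr P (fun w => PV j w <= x) = F j x)
  (Hyt0 : yt 0%nat = 0)
  (Hytmon : forall i, (1 <= i <= n)%nat -> yt (i - 1)%nat <= yt i)
  (Hytn : 0 < yt n)
  (Halpha : 0 < alpha < 1)
  (Hc1 : 0 <= c 1%nat)
  (Hcmon : forall i, (1 <= i < n)%nat -> c i <= c (S i))
  (Hcn : c n <= 1)
  (HG : forall i, (1 <= i <= n)%nat ->
        Gfun n F (c i) <= alpha / Dsum n yt * yt i) :
  FDR P n I PV c <= alpha /\
  Dsum n (fun i => INR i) = sum_1_to n (fun i => 1 / INR i) /\
  Dsum n (fun i => INR i * (INR i + 1)) = 2 * INR n.
Proof.
  split; [|split].
  2:{ unfold Dsum. rewrite !sum_1_to_s1. apply s1_ext. intros j Hj.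
      rewrite minus_INR by lia. pose proof (INR_gt0 j ltac:(lia)). change (INR 1) with 1. field. lra. }
  2:{ unfold Dsum. rewrite !sum_1_to_s1. rewrite <- s1_const.
      apply s1_ext. intros j Hj.
      rewrite minus_INR by lia. pose proof (INR_gt0 j ltac:(lia)). change (INR 1) with 1. field. lra. }
  set (D := Dsum n yt).
  set (y := fun k => alpha / D * yt k).
  assert (HD : 0 <= D).
  { unfold D, Dsum. rewrite sum_1_to_s1. apply s1_nonneg. intros j Hj.
    pose proof (INR_gt0 j ltac:(lia)). pose proof (Hytmon j Hj).
    apply Rmult_le_pos; [lra|apply Rlt_le, Rinv_0_lt_compat; lra]. }
  assert (Hcm : forall k k', (1 <= k <= k')%nat -> (k' <= n)%nat -> c k <= c k').
  { intros k k' Hk. induction k'; intros Hk'; [lia|].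
    destruct (Nat.eq_dec k (S k')) as [->|ne]; [lra|].
    pose proof (Hcmon k' ltac:(lia)). specialize (IHk' ltac:(lia) ltac:(lia)). lra. }
  set (Bev := fun k j (w : Omega) => I j = true /\ PV j w <= c k).
  set (L1 := flat_map (fun r => flat_map (fun v =>
        (INR v / INR (Nat.max r 1),
         fun w => num_false_rej n I c (fun j => PV j w) = v /\
                  num_rej n c (fun j => PV j w) = r) :: nil) (seq 0 (S n))) (seq 0 (S n))).
  set (L2 := flat_map (fun k => flat_map (fun j => (1 / INR k - 1 / INR (S k), Bev k j) :: nil)
                (seq 1 n)) (seq 1 n) ++
             flat_map (fun j => (1 / INR (S n), Bev n j) :: nil) (seq 1 n)).
  assert (E1 : FDR P n I PV c = Elist P L1).
  { unfold Elist, L1, FDR. rewrite sumL_fm_upto. apply sumR_upto_ext. intros r _.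
    rewrite sumL_fm_upto. apply sumR_upto_ext. intros v _. simpl. ring. }
  assert (Hpw : forall w, flist L1 w <= flist L2 w).
  { intros w. set (pv := fun j => PV j w).
    set (Rn := num_rej n c pv). set (V := num_false_rej n I c pv).
    set (N := fun k => INR (length (filter (qf I pv (c k)) (seq 1 n)))).
    assert (F1 : flist L1 w = INR V / INR (Nat.max Rn 1)).
    { unfold flist, L1. rewrite sumL_fm_upto.
      rewrite (sum_delta n _ Rn).
      - rewrite sumL_fm_upto. rewrite (sum_delta n _ V).
        + simpl. rewrite ind_true by (split; reflexivity). ring.
        + apply (Nat.le_trans _ _ _ (V_le_R n pv c I)). apply (R_le_n n pv c I).
        + intros v ne. simpl. rewrite ind_false by (intros [e _]; apply ne; symmetry; exact e). ring.
      - apply (R_le_n n pv c I).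
      - intros r ne. rewrite sumL_fm_upto. apply sumR_upto_zero. intros v. simpl.
        rewrite ind_false by (intros [_ e]; apply ne; symmetry; exact e). ring. }
    assert (F2 : flist L2 w = s1 n (fun k => (1 / INR k - 1 / INR (S k)) * N k) + 1 / INR (S n) * N n).
    { unfold flist, L2. rewrite sumL_app, !sumL_fm_1n. f_equal.
      - apply s1_ext. intros k _. rewrite sumL_fm_1n. unfold N. rewrite <- count_lemma.
        rewrite <- s1_scal. apply s1_ext. intros j _. cbn [sumL fst snd]. unfold Bev, pv. ring.
      - unfold N. rewrite <- count_lemma. rewrite <- s1_scal. apply s1_ext. intros j _. cbn [sumL fst snd]. unfold Bev, pv. ring. }
    rewrite F1, F2. apply pw_ineq.
    - intros k. apply pos_INR.
    - intros k k' Hk Hk'. unfold N. apply le_INR. apply filter_length_mono.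
      intros j. unfold qf. destruct (I j); simpl; [|discriminate].
      destruct Rle_dec; [|discriminate]. destruct Rle_dec; [reflexivity|].
      pose proof (Hcm k k' Hk Hk'). lra.
    - apply (R_le_n n pv c I).
    - intros H0. unfold V. rewrite (V_R0 n pv c I H0). reflexivity.
    - intros H1. unfold N. apply le_INR. apply V_le_N. exact H1. }
  assert (HPrB : forall k j, (1 <= j <= n)%nat -> Pr P (Bev k j) <= F j (c k)).
  { intros k j Hj. unfold Bev. destruct (I j) eqn:E.
    - rewrite <- (HPV j (c k) E). right. apply Pr_ext. intros; tauto.
    - rewrite (Pr_empty P) by (intros w [e _]; discriminate).
      destruct (HFcdf j Hj) as [_ [Hb _]]. apply Hb. }
  assert (HsB : forall k, (1 <= k <= n)%nat -> s1 n (fun j => Pr P (Bev k j)) <= y k).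
  { intros k Hk. eapply Rle_trans; [apply s1_le; intros j Hj; apply (HPrB k j Hj)|].
    rewrite <- sum_1_to_s1. apply HG. exact Hk. }
  assert (E2 : Elist P L2 <= s1 n (fun k => (1 / INR k - 1 / INR (S k)) * y k) + 1 / INR (S n) * y n).
  { unfold Elist, L2. rewrite sumL_app, !sumL_fm_1n. apply Rplus_le_compat.
    - apply s1_le. intros k Hk. rewrite sumL_fm_1n.
      rewrite (s1_ext _ _ (fun j => (1 / INR k - 1 / INR (S k)) * Pr P (Bev k j))) by (intros; simpl; ring).
      rewrite s1_scal. apply Rmult_le_compat_l; [apply coef_nonneg; lia|]. apply HsB. exact Hk.
    - rewrite (s1_ext _ _ (fun j => 1 / INR (S n) * Pr P (Bev n j))) by (intros; simpl; ring).
      rewrite s1_scal. apply Rmult_le_compat_l.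
      + apply Rlt_le, Rdiv_lt_0_compat; [lra|apply INR_gt0; lia].
      + destruct n as [|n'].
        * simpl. unfold y. rewrite Hyt0. lra.
        * apply HsB. lia. }
  rewrite E1. eapply Rle_trans; [apply Elist_mono; exact Hpw|].
  eapply Rle_trans; [exact E2|].
  rewrite abel by (unfold y; rewrite Hyt0; ring).
  rewrite (s1_ext _ _ (fun k => alpha / D * ((yt k - yt (k - 1)%nat) / INR k))) by (intros; unfold y, Rdiv; ring).
  rewrite s1_scal. rewrite <- sum_1_to_s1. fold (Dsum n yt). fold D.
  destruct (Req_dec D 0) as [->|nz].
  - unfold Rdiv. rewrite Rinv_0. lra.
  - field_simplify; lra.
Qed.
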